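(* Consider the two-player Tower of Hanoi game under normal play on three pegs with $n\ge1$ disks, with any of the ending conditions (EC1)–(EC5) (for $n=1$ only (EC1), (EC4), (EC5)). Then the first player (Anh) has a strategy that makes the game terminate with her making the last move; i.e. the first player wins. Moreover, the same holds from any non-final position with the player to move in the role of the first player, provided the previous player's move did not move the smallest disk.
   Context: Tower of Hanoi on $l$ pegs (here $l=3$, pegs labeled $1,\dots,l$) with $n$ disks of pairwise distinct sizes: a position assigns each disk to a peg, disks on each peg stacked with sizes decreasing from bottom to top. A legal move transfers the top disk of one peg to a different peg that is empty or has a larger top disk. A tower position is one with all disks on one peg. Two-player game: Anh (first player) and Bao (second player) alternate moves starting from the position with all disks on Peg 1; a player may not move the disk that the opponent moved in the immediately preceding move. The game ends when the tower has been transferred to a final peg, according to one fixed ending condition: (EC1) all disks on a given peg distinct from Peg 1; (EC2) all disks on Peg 1, the largest disk having been moved at least once; (EC3) all disks on Peg 1, the smallest disk having been moved at least once; (EC4) all disks on any peg, the largest disk having been moved at least once; (EC5) all disks on any peg, the smallest disk having been moved at least once. A move creating a tower position that does not end the game (tower on a non-final peg) is not allowed; (EC2) and (EC3) are not applicable for $n=1$. Normal play: the player who makes the last (game-ending) move wins; if neither player can force a win, the game is a draw. *)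

(* Defs.v *)
From mathcomp Require Import all_boot.
Set Implicit Arguments. Unset Strict Implicit. Unset Printing Implicit Defensive.

(* Disks are 'I_n, disk i having size i (0 = smallest, n.-1 = largest).
   Pegs are 'I_3; Peg 1 of the paper is ord0 (peg k is index k-1).
   A configuration assigns a peg to each disk; on each peg the disks are
   stacked in decreasing size from bottom to top, so the top disk of a peg
   is the smallest disk on it. *)
Definition config (n : nat) := {ffun 'I_n -> 'I_3}.

(* A game state: configuration, the disk moved in the immediately preceding
   move (None at the start), and whether the largest / smallest disk has
   already been moved at least once. *)
Record state (n : nat) := State {
  cfg : config n;
  last_disk : option 'I_n;
  movedL : bool;
  movedS : bool }.

Definition peg1 : 'I_3 := ord0.

Definition tower_on n (c : config n) (p : 'I_3) : Prop := forall i : 'I_n, c i = p.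
Definition is_tower n (c : config n) : Prop := exists p : 'I_3, tower_on c p.

Inductive ending := EC1 of 'I_3 | EC2 | EC3 | EC4 | EC5.

Definition valid_ending (n : nat) (ec : ending) : Prop :=
  match ec with
  | EC1 f => f <> peg1
  | EC2 | EC3 => 1 < n
  | EC4 | EC5 => True
  end.

Definition game_over n (ec : ending) (s : state n) : Prop :=
  match ec with
  | EC1 f => tower_on (cfg s) f
  | EC2 => tower_on (cfg s) peg1 /\ movedL s
  | EC3 => tower_on (cfg s) peg1 /\ movedS s
  | EC4 => (exists p, tower_on (cfg s) p) /\ movedL s
  | EC5 => (exists p, tower_on (cfg s) p) /\ movedS s
  end.

Definition hanoi_move n (c : config n) (d : 'I_n) (q : 'I_3) : Prop :=
  (forall i : 'I_n, i < d -> c i <> c d) /\ q <> c d /\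
  (forall i : 'I_n, i < d -> c i <> q).

Definition game_move n (ec : ending) (s s' : state n) : Prop :=
  ~ game_over ec s /\
  exists (d : 'I_n) (q : 'I_3),
    hanoi_move (cfg s) d q /\
    last_disk s <> Some d /\
    cfg s' = [ffun i => if i == d then q else cfg s i] /\
    last_disk s' = Some d /\
    movedL s' = movedL s || (nat_of_ord d == n.-1) /\
    movedS s' = movedS s || (nat_of_ord d == 0) /\
    (is_tower (cfg s') -> game_over ec s').

(* The player to move in s can force the game to terminate with her making
   the last (game-ending) move (inductive = in finitely many moves). *)
Inductive mover_wins n (ec : ending) : state n -> Prop :=
  | MoverWins (s s' : state n) :
      game_move ec s s' ->
      (game_over ec s' \/
        ((exists s'', game_move ec s' s'') /\
         (forall s'', game_move ec s' s'' -> mover_wins ec s''))) ->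
      mover_wins ec s.

Definition initial_state (n : nat) : state n :=
  State [ffun=> peg1] None false false.

(* Main.v *)
Require Import Defs.
From mathcomp Require Import all_boot zify.
From Stdlib Require Import Classical FunctionalExtensionality.
Set Implicit Arguments. Unset Strict Implicit. Unset Printing Implicit Defensive.

Definition p0 : 'I_3 := @Ordinal 3 0 isT.
Definition p1 : 'I_3 := @Ordinal 3 1 isT.
Definition p2 : 'I_3 := @Ordinal 3 2 isT.

Lemma peg_cases (x : 'I_3) : x = p0 \/ x = p1 \/ x = p2.
Proof.
case: x => [[|[|[|m]]] H]; [left|right;left|right;right|by []]; exact: val_inj.
Qed.

Definition third (a b : 'I_3) : 'I_3 :=
  if (p0 != a) && (p0 != b) then p0 else if (p1 != a) && (p1 != b) then p1 else p2.


Lemma third_neqa a b : a != b -> third a b != a.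
Proof. by case: (peg_cases a) => [->|[->|->]]; case: (peg_cases b) => [->|[->|->]]. Qed.
Lemma third_neqb a b : a != b -> third a b != b.
Proof. by case: (peg_cases a) => [->|[->|->]]; case: (peg_cases b) => [->|[->|->]]. Qed.
Lemma peg3 (a b x y : 'I_3) : a != b -> a != x -> b != x -> y != a -> y != b -> y != x -> False.
Proof.
by case: (peg_cases a) => [->|[->|->]]; case: (peg_cases b) => [->|[->|->]];
 case: (peg_cases x) => [->|[->|->]]; case: (peg_cases y) => [->|[->|->]].
Qed.
Lemma third_eq a b x : a != b -> x != a -> x != b -> x = third a b.
Proof.
by case: (peg_cases a) => [->|[->|->]]; case: (peg_cases b) => [->|[->|->]];
 case: (peg_cases x) => [->|[->|->]].
Qed.

Definition upd (c : nat -> 'I_3) (j : nat) (q : 'I_3) : nat -> 'I_3 :=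
  fun i => if i == j then q else c i.

Fixpoint F (c : nat -> 'I_3) (k : nat) (p : 'I_3) : nat :=
  if k is k'.+1 then
    (if c k'.+1 == p then F c k' p else 2 ^ k' + F c k' (third (c k'.+1) p))
  else 0.

Definition bigmove k (c : nat -> 'I_3) j q :=
  [/\ 0 < j <= k, q != c j & forall i, 0 < i < j -> (c i != c j) && (c i != q)].

Lemma F_ext c c' k p : (forall i, 0 < i <= k -> c i = c' i) -> F c k p = F c' k p.
Proof.
elim: k p => [//|k IH] p H /=.
have Hk : forall i, 0 < i <= k -> c i = c' i by move=> i /andP[a b]; apply: H; lia.
by rewrite H ?IH //; lia.
Qed.

Lemma F_tower c k r p : (forall i, 0 < i <= k -> c i = r) ->
  F c k p = if r == p then 0 else 2 ^ k - 1.
Proof.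
elim: k p => [|k IH] p H /=; first by case: (r == p).
have Hk : forall i, 0 < i <= k -> c i = r by move=> i /andP[a b]; apply: H; lia.
rewrite H; last lia.
case: (eqVneq r p) => [Erp|rp].
  by subst r; rewrite IH // eqxx.
rewrite IH //.
move: rp => /third_neqa; rewrite eq_sym => /negbTE ->.
have := expn_gt0 2 k; rewrite expnS /=; lia.
Qed.

Lemma bigmove_down k c j q : bigmove k.+1 c j q -> j != k.+1 -> bigmove k c j q.
Proof. by case=> /andP[a b] h1 h2 h3; split=> //; apply/andP; split=> //; lia. Qed.

Lemma bigmove_lift k c j q : bigmove k c j q -> bigmove k.+1 c j q.
Proof. by case=> /andP[a b] h1 h2; split=> //; apply/andP; split=> //; lia. Qed.

Lemma F_move_le k c j q p : bigmove k c j q -> F (upd c j q) k p <= (F c k p).+1.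
Proof.
elim: k p => [|k IH] p Hm; first by case: Hm => /andP[a b]; lia.
rewrite /=.
case: (eqVneq j k.+1) => [Ej|Nj].
- subst j. case: Hm => _ Hq Hi.
  have Hr : forall i, 0 < i <= k -> c i = third (c k.+1) q.
    move=> i /andP[a b]; have /andP[h1 h2] : (c i != c k.+1) && (c i != q) by apply: Hi; rewrite a; lia.
    have Hcq : c k.+1 != q by rewrite eq_sym.
    exact: third_eq.
  have Hr' : forall i, 0 < i <= k -> upd c k.+1 q i = third (c k.+1) q.
    move=> i /andP[a b]; rewrite /upd ifF; last by apply/eqP; lia.
    by apply: Hr; rewrite a b.
  rewrite /upd eqxx !(F_tower _ Hr') !(F_tower _ Hr).
  have := expn_gt0 2 k.
  clear IH Hi Hr Hr'; move: Hq; move: (c k.+1) q p => a b e.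
  move: (2 ^ k) => X.
  by case: (peg_cases a) => [->|[->|->]]; case: (peg_cases b) => [->|[->|->]];
   case: (peg_cases e) => [->|[->|->]] => //= _; lia.
- have Hm' := bigmove_down Hm Nj.
  have E : upd c j q k.+1 = c k.+1 by rewrite /upd eq_sym (negbTE Nj).
  rewrite E; case: ifP => _; first exact: IH.
  by rewrite -addnS leq_add2l; apply: IH.
Qed.

Lemma F_dec k c p : (exists i, (0 < i <= k) && (c i != p)) ->
  exists j q, bigmove k c j q /\ (F (upd c j q) k p).+1 = F c k p.
Proof.
elim: k p => [|k IH] p.
  by case=> i /andP[/andP[a b] _]; lia.
case=> i /andP[/andP[i0 ik] ip].
have updk : forall j q, j <= k -> upd c j q k.+1 = c k.+1.
  by move=> j q jk; rewrite /upd ifF //; apply/eqP; lia.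
case: (eqVneq (c k.+1) p) => [Ep|Np].
- have ik' : i <= k by case: (ltngtP i k.+1) => //; [lia|move=> E; subst i; rewrite Ep eqxx in ip].
  have [j [q [Hm HF]]] : exists j q, bigmove k c j q /\ (F (upd c j q) k p).+1 = F c k p.
    by apply: IH; exists i; rewrite i0 ik' ip.
  exists j, q; split; first exact: bigmove_lift.
  have jk : j <= k by case: Hm => /andP[].
  by rewrite /= updk // Ep eqxx.
- set r := third (c k.+1) p.
  case: (classic (exists i, (0 < i <= k) && (c i != r))) => [Hex|Hno].
  + have [j [q [Hm HF]]] := IH r Hex.
    exists j, q; split; first exact: bigmove_lift.
    have jk : j <= k by case: Hm => /andP[].
    by rewrite /= updk // (negbTE Np) -/r -addnS HF.
  + have Hall : forall i, 0 < i <= k -> c i = r.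
      move=> i' Hi'; case: (eqVneq (c i') r) => // Hn; exfalso; apply: Hno; exists i'; by rewrite Hi'.
    exists k.+1, p; split.
      split; [by rewrite ltn0Sn leqnn | by rewrite eq_sym | ].
      move=> i' /andP[a b]; rewrite Hall; last by rewrite a; lia.
      by rewrite third_neqa // third_neqb.
    have Hall' : forall i, 0 < i <= k -> upd c k.+1 p i = r.
      by move=> i' /andP[a b]; rewrite /upd ifF; [apply: Hall; rewrite a|apply/eqP; lia].
    rewrite /= /upd eqxx (negbTE Np) -/upd (F_tower _ Hall') (F_tower _ Hall) eqxx.
    have : r != p by rewrite third_neqb.
    move/negbTE => ->; rewrite /r eqxx; have := expn_gt0 2 k; lia.
Qed.

Lemma bigmove_rev k c j q : bigmove k c j q -> bigmove k (upd c j q) j (c j).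
Proof.
case=> H1 H2 H3; split => //; rewrite /upd ?eqxx; first by rewrite eq_sym.
move=> i /andP[a b]; rewrite ifF; last by apply/eqP; lia.
have /andP[u v] := H3 i (introT andP (conj a b)).
by rewrite u v.
Qed.

Lemma upd_upd c j q q' : upd (upd c j q) j q' = upd c j q'.
Proof. apply: functional_extensionality => i; rewrite /upd; by case: (i == j). Qed.

Lemma upd_id c j : upd c j (c j) = c.
Proof. apply: functional_extensionality => i; rewrite /upd; by case: eqP => [->|]. Qed.

Lemma bigmove_uniq k c j q j' q' w : bigmove k c j q -> bigmove k c j' q' ->
  c j != w -> q != w -> c j' != w -> q' != w -> j = j' /\ q = q'.
Proof.
move=> [H1 H2 H3] [H1' H2' H3'] a b a' b'.
case: (ltngtP j j') => [lt|lt|E].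
- have /andP[u v] : (c j != c j') && (c j != q') by apply: H3'; rewrite lt; case/andP: H1 => ->.
  exfalso; apply: (peg3 (a := w) (b := c j') (x := q') (y := c j)) => //; by rewrite eq_sym.
- have /andP[u v] : (c j' != c j) && (c j' != q) by apply: H3; rewrite lt; case/andP: H1' => ->.
  exfalso; apply: (peg3 (a := w) (b := c j) (x := q) (y := c j')) => //; by rewrite eq_sym.
- subst j'; split => //; apply/eqP; apply: contraT => nq.
  exfalso; apply: (peg3 (a := w) (b := c j) (x := q) (y := q')) => //; by rewrite eq_sym.
Qed.

Section Trans.
Variables (k : nat) (p : 'I_3).
Hypothesis k0 : 0 < k.

Definition goalB (B : nat -> 'I_3) (v : 'I_3) :=
  (forall i, 0 < i <= k -> B i = p) /\ v != p.

Definition goodB (B : nat -> 'I_3) (v : 'I_3) :=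
  exists w j q, [/\ w != v, bigmove k B j q, B j != w, q != w &
                   F (upd B j q) k p < F B k p].

Definition meas B v N :=
  (goodB B v /\ F B k p <= N) \/ (~ goodB B v /\ v != B 1 /\ (F B k p).+2 <= N) \/
  (~ goodB B v /\ v = B 1 /\ (F B k p).+4 <= N).

Lemma meas_ex B v : exists N, meas B v N.
Proof.
exists (F B k p).+4; case: (classic (goodB B v)) => g.
  by left; split => //; lia.
right; case: (eqVneq v (B 1)) => e; [right|left]; split => //; split => //; lia.
Qed.

Lemma meas0 B v : ~ meas B v 0.
Proof. by case=> [[[w [j [q [_ _ _ _ h]]]] h']|[[_ [_ h]]|[_ [_ h]]]]; lia. Qed.

Lemma F_lower B j q : bigmove k B j q -> F B k p <= (F (upd B j q) k p).+1.
Proof. by move=> /bigmove_rev /(F_move_le p); rewrite upd_upd upd_id. Qed.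

Lemma not_all B : ~ (forall i, 0 < i <= k -> B i = p) -> exists i, (0 < i <= k) && (B i != p).
Proof.
move=> H; apply: NNPP => H2; apply: H => i Hi.
case: (eqVneq (B i) p) => // Hn; exfalso; apply: H2; exists i; by rewrite Hi.
Qed.

Lemma bigmove1 B q : q != B 1 -> bigmove k B 1 q.
Proof. move=> h; split => //. by move=> i; lia. Qed.

Lemma trans B v N : meas B v N.+1 -> ~ goalB B v ->
  exists w j q, [/\ w != v, bigmove k B j q, B j != w, q != w &
     goalB (upd B j q) w \/ meas (upd B j q) w N].
Proof.
move=> Hm Hng.
case: Hm => [[[w [j [q [wv Hb jw qw Hlt]]]] HF]|[[Hng2 [vB HF]]|[Hng2 [vB HF]]]].
- exists w, j, q; split => //.
  have Hlow := F_lower Hb.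
  have jk : 0 < j <= k by case: Hb.
  case: (classic (forall i, 0 < i <= k -> (upd B j q) i = p)) => [Hall|Hnall].
    left; split => //.
    have : (upd B j q) j = p by apply: Hall.
    rewrite /upd eqxx => Eq; by rewrite -Eq eq_sym.
  right; left; split; last by lia.
  have [j2 [q2 [Hb2 HF2]]] := F_dec (not_all Hnall).
  have Hd2 : (upd B j q) j2 != q2 by case: Hb2 => _; rewrite eq_sym.
  case: (eqVneq (third ((upd B j q) j2) q2) w) => Ew.
  + exfalso.
    have [E1 E2] : j2 = j /\ q2 = B j.
      apply: (bigmove_uniq (w := w) Hb2 (bigmove_rev Hb)).
      * by rewrite -Ew eq_sym third_neqa.
      * by rewrite -Ew eq_sym third_neqb.
      * by rewrite /upd eqxx.
      * exact: jw.
    move: HF2; rewrite E1 E2 upd_upd upd_id; lia.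
  + exists (third ((upd B j q) j2) q2), j2, q2; split => //.
    * by rewrite eq_sym third_neqa.
    * by rewrite eq_sym third_neqb.
    * lia.
- have Hd : B 1 != v by rewrite eq_sym.
  set u := third (B 1) v.
  have uv : u != v by rewrite third_neqb.
  have Bu : B 1 != u by rewrite eq_sym third_neqa.
  have Hb1u : bigmove k B 1 u by apply: bigmove1; rewrite eq_sym.
  have Hb1v : bigmove k B 1 v by apply: bigmove1.
  exists u, 1, v; split => //; first by rewrite eq_sym.
  right; left.
  have Hnall : ~ (forall i, 0 < i <= k -> B i = p).
    move=> Hall; apply: Hng; split => //.
    by rewrite -(Hall 1) ?k0 // eq_sym.
  have [j' [q' [Hb' HF']]] := F_dec (not_all Hnall).
  have Hd' : B j' != q' by case: Hb' => _; rewrite eq_sym.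
  have HFu : (F (upd B 1 u) k p).+1 = F B k p.
    case: (eqVneq (third (B j') q') v) => Ev.
    + have [E1 E2] : j' = 1 /\ q' = u.
        apply: (bigmove_uniq (w := v) Hb' Hb1u) => //.
        * by rewrite -Ev eq_sym third_neqa.
        * by rewrite -Ev eq_sym third_neqb.
      by rewrite -E1 -E2.
    + exfalso; apply: Hng2; exists (third (B j') q'), j', q'; split => //.
      * by rewrite eq_sym third_neqa.
      * by rewrite eq_sym third_neqb.
      * lia.
  have Hge : F B k p <= F (upd B 1 v) k p.
    case: (leqP (F B k p) (F (upd B 1 v) k p)) => // lt; exfalso; apply: Hng2.
    exists u, 1, v; split => //; by rewrite eq_sym.
  have Hup : F (upd B 1 v) k p <= (F (upd B 1 u) k p).+1.
    have Hm : bigmove k (upd B 1 u) 1 v by apply: bigmove1; rewrite /upd eqxx eq_sym.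
    by have := F_move_le p Hm; rewrite upd_upd.
  split; last by lia.
  exists (B 1), 1, u; split => //.
  + by apply: bigmove1; rewrite /upd eqxx.
  + by rewrite eq_sym.
  + rewrite upd_upd; lia.
- set w := if v == p0 then p1 else p0.
  have wv : w != v by rewrite /w; case: (peg_cases v) => [->|[->|->]].
  have Hd : v != w by rewrite eq_sym.
  set u := third v w.
  exists w, 1, u; split => //.
  + by apply: bigmove1; rewrite -vB third_neqa.
  + by rewrite -vB.
  + by rewrite third_neqb.
  + right.
    have Hb : bigmove k B 1 u by apply: bigmove1; rewrite -vB third_neqa.
    have Fle := F_move_le p Hb.
    case: (classic (goodB (upd B 1 u) w)) => g.
      by left; split => //; lia.
    right; left; split => //; split; last by lia.
    by rewrite /upd eqxx eq_sym third_neqb.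
Qed.
End Trans.

Section Game.
Variables (m : nat) (ec : ending).
Local Notation n := m.+2.
Local Notation st := (state n).

Definition cn (c : config n) : nat -> 'I_3 :=
  fun i => if 0 < i < n then c (inord i) else p0.

Definition my_ok (s : st) := last_disk s <> Some ord0 /\ ~ game_over ec s.

Lemma game_over_tower (s : st) : game_over ec s -> is_tower (cfg s).
Proof.
case: ec => [f||||] /=.
- by move=> h; exists f.
- by case=> h _; exists peg1.
- by case=> h _; exists peg1.
- by case=> [[p h] _]; exists p.
- by case=> [[p h] _]; exists p.
Qed.

Lemma cn_ord (c : config n) (i : 'I_n) : 0 < i -> cn c i = c i.
Proof.
move=> h; rewrite /cn h ltn_ord /=; congr (c _); apply: val_inj; by rewrite /= inordK.
Qed.

Lemma upd0E (c : config n) w (i : 'I_n) : 0 < i ->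
  [ffun i => if i == ord0 then w else c i] i = cn c i.
Proof.
move=> h; rewrite ffunE ifF ?cn_ord //; apply/eqP => E; by rewrite E in h.
Qed.

Lemma cn_upd (c : config n) w (j : 'I_n) q : 0 < j ->
  cn [ffun i => if i == j then q else [ffun i => if i == ord0 then w else c i] i]
  = upd (cn c) j q.
Proof.
move=> j0; apply: functional_extensionality => i; rewrite /cn /upd.
case: ifP => H.
- have iv : nat_of_ord (inord i : 'I_n) = i by rewrite inordK //; case/andP: H.
  rewrite !ffunE -(inj_eq val_inj) /= iv.
  case: (i == j) => //.
  rewrite ifF //; apply/eqP => E; move: iv; rewrite E /= => E'; rewrite -E' in H; by case/andP: H.
- rewrite ifF //; apply/eqP => E; subst i; by rewrite j0 ltn_ord in H.
Qed.

Lemma notower2 (c : config n) (a b : 'I_n) : c a != c b -> ~ is_tower c.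
Proof. move=> h [r hr]; by rewrite !hr eqxx in h. Qed.

Lemma round (s : st) (w : 'I_3) (j : nat) (q : 'I_3) :
  my_ok s -> w != cfg s ord0 -> bigmove m.+1 (cn (cfg s)) j q ->
  cn (cfg s) j != w -> q != w ->
  (forall s' s'', game_move ec s s' -> game_move ec s' s'' ->
     cn (cfg s'') = upd (cn (cfg s)) j q -> cfg s'' ord0 = w -> my_ok s'' ->
     mover_wins ec s'') -> mover_wins ec s.
Proof.
move=> [Hl Hgo] Hw [Hj Hq Hi] Hjw Hqw Hcont.
set c := cfg s in Hw Hq Hi Hjw Hcont *.
set c' : config n := [ffun i => if i == ord0 then w else c i].
have jn : j < n by case/andP: Hj => _ h; lia.
have j0 : 0 < j by case/andP: Hj.
set dj : 'I_n := Ordinal jn.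
have c'0 : c' ord0 = w by rewrite ffunE eqxx.
have c'j : c' dj = cn c j by rewrite upd0E.
have nt' : ~ is_tower c'.
  by apply: (@notower2 _ dj ord0); rewrite c'0 c'j.
set s' : st := State c' (Some ord0) (movedL s || (nat_of_ord (@ord0 m.+1) == n.-1))
                 (movedS s || (nat_of_ord (@ord0 m.+1) == 0)).
have Hmv : game_move ec s s'.
  split => //; exists ord0, w; split.
    split; first by move=> i; rewrite ltn0.
    by split; [apply/eqP|move=> i; rewrite ltn0].
  by do 5 (split => //); move/nt'.
apply: (MoverWins Hmv); right; split.
- set c'' : config n := [ffun i => if i == dj then q else c' i].
  exists (State c'' (Some dj) (movedL s' || (nat_of_ord dj == n.-1))
                 (movedS s' || (nat_of_ord dj == 0))).
  split; first by move/game_over_tower/nt'.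
  exists dj, q; split.
    split; last split.
    + move=> i; case: (posnP i) => [i0|ip] ilt.
        have -> : i = ord0 by apply: val_inj.
        by rewrite /= c'0 c'j; apply/eqP; rewrite eq_sym.
      rewrite /= c'j upd0E //; apply/eqP.
      by case/andP: (Hi i (introT andP (conj ip ilt))).
    + by rewrite /= c'j; apply/eqP.
    + move=> i; case: (posnP i) => [i0|ip] ilt.
        have -> : i = ord0 by apply: val_inj.
        by rewrite /= c'0; apply/eqP; rewrite eq_sym.
      rewrite /= upd0E //; apply/eqP.
      by case/andP: (Hi i (introT andP (conj ip ilt))).
  split; first by move=> [E]; rewrite -E in j0.
  do 4 (split => //).
  move=> Ht; exfalso; apply: (notower2 (a := dj) (b := ord0) _ Ht) => /=.
  rewrite !ffunE eqxx ifF; last by apply/eqP => E; move: j0; rewrite -[j]/(nat_of_ord dj) -E.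
  by [].
- move=> s'' Hmv2.
  case: (Hmv2) => Hngo [d [q'' [[H1 [H2 H3]] [Hld [Hc [Hld' _]]]]]].
  have d0 : 0 < d.
    case: (posnP d) => // E; exfalso; apply: Hld; congr Some; by apply: val_inj.
  have dw : c' d != w.
    apply/eqP => E; apply: (H1 ord0) => //; by rewrite c'0.
  have qw : q'' != w.
    apply/eqP => E; apply: (H3 ord0) => //; by rewrite c'0.
  move: H1 H2 H3; rewrite /= => H1 H2 H3.
  have c'd : c' d = cn c d by rewrite upd0E.
  have Hbm : bigmove m.+1 (cn c) d q''.
    split.
    + by rewrite d0 /=; have := ltn_ord d; lia.
    + by rewrite -c'd; apply/eqP.
    + move=> i /andP[i0 id].
      have iN : i < n by have := ltn_ord d; lia.
      have E : cn c i = c' (Ordinal iN) by rewrite upd0E.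
      rewrite E -c'd.
      have id' : Ordinal iN < d by [].
      by apply/andP; split; apply/eqP; [apply: H1|apply: H3].
  have [Ej Eq] : val d = j /\ q'' = q.
    apply: (bigmove_uniq (w := w) Hbm (And3 Hj Hq Hi)) => //; by rewrite -c'd.
  have Ed : d = dj by apply: val_inj.
  subst q''.
  apply: (Hcont s' s'' Hmv Hmv2).
  + by rewrite Hc cn_upd // Ej.
  + rewrite Hc !ffunE ifF ?eqxx //; apply/eqP => E; by rewrite -E in d0.
  + split; first by rewrite Hld' => [[E]]; rewrite E in d0.
    move/game_over_tower; apply: (@notower2 _ d ord0).
    rewrite Hc !ffunE eqxx ifF; last by apply/eqP => E; rewrite -E in d0.
    by [].
Qed.

Lemma goal_tower (s : st) P : goalB m.+1 P (cn (cfg s)) (cfg s ord0) ->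
  tower_on [ffun i => if i == ord0 then P else cfg s i] P.
Proof.
case=> H _ i; rewrite ffunE; case: eqP => // ne.
have i0 : 0 < i by case: (posnP i) => // E; exfalso; apply: ne; apply: val_inj.
rewrite -cn_ord //; apply: H; rewrite i0 /=; have := ltn_ord i; lia.
Qed.

Lemma finish (s : st) P : my_ok s -> goalB m.+1 P (cn (cfg s)) (cfg s ord0) ->
  game_over ec (State [ffun i => if i == ord0 then P else cfg s i] (Some ord0)
     (movedL s || (nat_of_ord (@ord0 m.+1) == n.-1))
     (movedS s || (nat_of_ord (@ord0 m.+1) == 0))) -> mover_wins ec s.
Proof.
move=> [Hl Hgo] Hg Hov; apply: (MoverWins (s' := State _ _ _ _)); last by left; exact: Hov.
split => //; exists ord0, P; split.
  split; first by move=> i; rewrite ltn0.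
  split; last by move=> i; rewrite ltn0.
  by case: Hg => _ /eqP h; move=> E; apply: h; rewrite E.
by do 5 (split => //).
Qed.

Section Reach.
Variables (p : 'I_3) (Kinv : st -> Prop).
Hypothesis HK : forall s s', game_move ec s s' -> Kinv s -> Kinv s'.
Hypothesis Hgoal : forall s, my_ok s -> Kinv s ->
  goalB m.+1 p (cn (cfg s)) (cfg s ord0) -> mover_wins ec s.

Lemma reachN N : forall s, my_ok s -> Kinv s ->
  meas m.+1 p (cn (cfg s)) (cfg s ord0) N -> mover_wins ec s.
Proof.
elim: N => [|N IH] s Hok HKs Hm.
  by exfalso; apply: (meas0 (ltn0Sn m) Hm).
case: (classic (goalB m.+1 p (cn (cfg s)) (cfg s ord0))) => Hg; first exact: Hgoal.
have [w [j [q [wv Hb jw qw Hnext]]]] := @trans m.+1 p (ltn0Sn m) _ _ _ Hm Hg.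
apply: (round Hok wv Hb jw qw) => s' s'' H1 H2 Hcn H0 Hok''.
have HK'' : Kinv s'' by apply: (HK H2); apply: (HK H1).
case: Hnext; rewrite -Hcn -H0 => Hn.
  exact: Hgoal.
exact: IH.
Qed.

Lemma reach s : my_ok s -> Kinv s -> mover_wins ec s.
Proof.
move=> Hok HKs; have [N HN] := meas_ex p (ltn0Sn m) (cn (cfg s)) (cfg s ord0).
exact: (reachN Hok HKs HN).
Qed.
End Reach.

Definition XP P (s : st) := movedL s || (cfg s ord_max != P).
Definition FinP P (s : st) := forall (c2 : config n) x (mL mS : bool), tower_on c2 P -> (XP P s -> mL) -> mS ->
  game_over ec (@State n c2 x mL mS).

Lemma X_mono P s s' : game_move ec s s' -> XP P s -> XP P s'.
Proof.
case=> _ [d [q [_ [_ [Hc [_ [HL _]]]]]]].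
rewrite /XP HL Hc ffunE; case/orP => [->//|Hn].
case: (eqVneq ord_max d) => [E|NE].
  by rewrite -E /= eqxx orbT.
by rewrite Hn !orbT.
Qed.

Lemma phase2 P s : my_ok s -> FinP P s -> mover_wins ec s.
Proof.
apply: (reach (p := P) (Kinv := FinP P)).
  move=> s1 s2 Hmv HF c2 x mL mS T HX HS; apply: (HF c2 x mL mS T) => // h.
  by apply: HX; apply: (X_mono Hmv).
move=> s1 Hok HF Hg; apply: (finish Hok Hg).
apply: HF => //; first exact: goal_tower.
rewrite /XP.
have -> : cfg s1 ord_max = P.
  have [H _] := Hg; rewrite -cn_ord //; apply: H; by rewrite /= leqnn.
  by rewrite eqxx /= !orbF.
by rewrite /= orbT.
Qed.

Lemma exP : exists P : 'I_3, forall (c2 : config n) x (mL mS : bool),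
  tower_on c2 P -> mL -> mS -> game_over ec (@State n c2 x mL mS).
Proof.
case: ec => [f||||].
- by exists f.
- by exists peg1 => c2 x mL mS T HL HS; split.
- by exists peg1 => c2 x mL mS T HL HS; split.
- by exists peg1 => c2 x mL mS T HL HS; split => //; exists peg1.
- by exists peg1 => c2 x mL mS T HL HS; split => //; exists peg1.
Qed.

Lemma main_ok s : my_ok s -> mover_wins ec s.
Proof.
have [P HP] := exP.
set Q : 'I_3 := if P == p0 then p1 else p0.
have QP : Q != P by rewrite /Q; case: (peg_cases P) => [->|[->|->]].
move=> Hok0.
have HK : forall s1 s2 : st, game_move ec s1 s2 -> True -> True by [].
apply: (@reach Q (fun _ => True) HK _ s Hok0 I) => s1 Hok _ Hg.
apply: (phase2 (P := P) Hok) => c2 x mL mS T HX HS.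
apply: HP => //; apply: HX; rewrite /XP.
have -> : cfg s1 ord_max = Q.
  have [H _] := Hg; rewrite -cn_ord //; apply: H; by rewrite /= leqnn.
by rewrite QP orbT.
Qed.
End Game.

Lemma n1_win ec (s : state 1) (T : 'I_3) :
  ~ game_over ec s -> (forall d : 'I_1, last_disk s = Some d -> nat_of_ord d <> 0) ->
  T != cfg s ord0 ->
  game_over ec (State [ffun i => if i == ord0 then T else cfg s i] (Some ord0)
     (movedL s || (nat_of_ord (@ord0 0) == 1.-1)) (movedS s || (nat_of_ord (@ord0 0) == 0))) ->
  mover_wins ec s.
Proof.
move=> Hgo Hl HT Hov; apply: (MoverWins (s' := State _ _ _ _)); last by left; exact: Hov.
split => //; exists ord0, T; split.
  split; first by move=> i; rewrite ltn0.
  split; last by move=> i; rewrite ltn0.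
  by move/eqP: HT.
split; first by move=> E; apply: (Hl _ E).
by do 4 (split => //).
Qed.

Lemma tower1 (T : 'I_3) (c : config 1) : tower_on [ffun i => if i == ord0 then T else c i] T.
Proof. by move=> i; rewrite ffunE (ord1 i) eqxx. Qed.

Lemma n1_all ec (s : state 1) : valid_ending 1 ec -> ~ game_over ec s ->
  (forall d : 'I_1, last_disk s = Some d -> nat_of_ord d <> 0) -> mover_wins ec s.
Proof.
move=> Hv Hgo Hl.
set T' : 'I_3 := if cfg s ord0 == p0 then p1 else p0.
have HT' : T' != cfg s ord0 by rewrite /T'; case: (peg_cases (cfg s ord0)) => [->|[->|->]].
case: ec Hv Hgo Hl => [f||||] Hv Hgo Hl //.
- apply: (n1_win (T := f)) => //; last apply: tower1.
  apply/eqP => E; apply: Hgo => i; by rewrite (ord1 i) E.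
- apply: (n1_win (T := T')) => //=; split; [exists T'; apply: tower1| by rewrite orbT].
- apply: (n1_win (T := T')) => //=; split; [exists T'; apply: tower1| by rewrite orbT].
Qed.

Theorem corollary2 (n : nat) (ec : ending) :
  0 < n -> valid_ending n ec ->
  mover_wins ec (initial_state n) /\
  (forall s : state n,
     ~ game_over ec s ->
     (forall d : 'I_n, last_disk s = Some d -> nat_of_ord d <> 0) ->
     mover_wins ec s).
Proof.
move=> n0 Hv.
have Hinit : ~ game_over ec (initial_state n).
  case: ec Hv => [f||||] Hv /=; try by case.
  move=> T; apply: Hv; have := T (Ordinal n0); by rewrite ffunE.
have Hinitl : forall d : 'I_n, last_disk (initial_state n) = Some d -> nat_of_ord d <> 0 by [].
suff H : forall s : state n, ~ game_over ec s ->
     (forall d : 'I_n, last_disk s = Some d -> nat_of_ord d <> 0) -> mover_wins ec s.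
  by split => //; apply: H.
case: n n0 Hv {Hinit Hinitl} => [//|[|m]] _ Hv s Hgo Hl.
- exact: n1_all.
- apply: main_ok; split => // E; exact: (Hl _ E).
Qed.
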